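(* Let $i$ be a positive integer and $\mathcal A$ an alphabet. Let $\mathcal B$ be the Butterfly Network and let $\mathbf A_{\mathcal B}$ be an adversary able to attack up to one edge of $\mathcal U=\{e_1,e_2,e_3,e_4,e_6,e_7,e_9\}$ in each round, possibly a different one in each round (Scenario A.2). Then the $i$-shot capacity of $\mathcal B$ is \[C_i(\mathcal B,\mathcal A,\mathbf A_{\mathcal B})=\log_{|\mathcal A|}(|\mathcal A|-1).\]
   Context: An alphabet is a finite set $\mathcal A$ with $|\mathcal A|\ge2$. The Butterfly Network $\mathcal B$ has source $S$, intermediate nodes $V_1,V_2,V_3,V_4$, terminals $T_1,T_2$, and edges $e_1,e_2:S\to V_1$; $e_3,e_4:S\to V_2$; $e_5:V_1\to T_1$; $e_6:V_1\to V_3$; $e_7:V_2\to V_3$; $e_8:V_2\to T_2$; $e_9:V_3\to V_4$; $e_{10}:V_4\to T_1$; $e_{11}:V_4\to T_2$. Each edge carries one symbol of $\mathcal A$. A network code assigns to each $V_j$ a function from the symbols on its incoming edges to the symbols on its outgoing edges. In one use, $S$ sends $x\in\mathcal A^4$ on $e_1,\dots,e_4$, the adversary may replace the symbol on at most one edge of $\mathcal U$ by an arbitrary symbol, and values propagate; $\Omega_k(x)$ is the set of vectors terminal $T_k$ can receive. For $i$ uses with the same network code (Scenario A.2), the fan-out set at $T_k$ of $(x^1,\dots,x^i)$ is $\Omega_k(x^1)\times\dots\times\Omega_k(x^i)$. A nonempty code $C\subseteq(\mathcal A^4)^i$ is unambiguous if, for each of $T_1,T_2$, distinct codewords have disjoint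 fan-out sets; $C_i$ is the maximum of $\log_{|\mathcal A|}(|C|)/i$ over network codes and unambiguous codes. *)

(* Defs.v *)
From Stdlib Require Import Reals.
From mathcomp Require Import all_boot.

Set Implicit Arguments.
Unset Strict Implicit.
Unset Printing Implicit Defensive.

Section Butterfly.
Variable A : finType.

(* V1 : (e1,e2) -> (e5,e6);  V2 : (e3,e4) -> (e7,e8);
   V3 : (e6,e7) -> e9;       V4 : e9 -> (e10,e11). *)
Record netcode := NetCode {
  nodeV1 : A * A -> A * A;
  nodeV2 : A * A -> A * A;
  nodeV3 : A * A -> A;
  nodeV4 : A -> A * A }.

Inductive uedge := E1 | E2 | E3 | E4 | E6 | E7 | E9.
Scheme Equality for uedge.

Definition attack := option (uedge * A).

Definition tamper (att : attack) (e : uedge) (s : A) : A :=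
  match att with
  | Some (e', a) => if uedge_beq e' e then a else s
  | None => s
  end.

Inductive terminal := T1 | T2.

Definition received (F : netcode) (att : attack) (x : A * A * A * A) (k : terminal)
  : A * A :=
  let '(x1, x2, x3, x4) := x in
  let s1 := tamper att E1 x1 in
  let s2 := tamper att E2 x2 in
  let s3 := tamper att E3 x3 in
  let s4 := tamper att E4 x4 in
  let '(y5, y6) := nodeV1 F (s1, s2) in
  let '(y7, y8) := nodeV2 F (s3, s4) in
  let s6 := tamper att E6 y6 in
  let s7 := tamper att E7 y7 in
  let y9 := nodeV3 F (s6, s7) in
  let s9 := tamper att E9 y9 in
  let '(y10, y11) := nodeV4 F s9 in
  match k with
  | T1 => (y5, y10)
  | T2 => (y8, y11)
  end.

Definition Omega (F : netcode) (k : terminal) (x : A * A * A * A) (y : A * A) : Prop :=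
  exists att : attack, received F att x k = y.

(* Fan-out set of a codeword (x^1,...,x^i) at T_k (Scenario A.2):
   Omega_k(x^1) x ... x Omega_k(x^i). *)
Definition fanout (i : nat) (F : netcode) (k : terminal)
  (c : {ffun 'I_i -> A * A * A * A}) (y : 'I_i -> A * A) : Prop :=
  forall j : 'I_i, Omega F k (c j) (y j).

Definition unambiguous (i : nat) (F : netcode) (C : {set {ffun 'I_i -> A * A * A * A}})
  : Prop :=
  C != set0 /\
  forall k : terminal, forall c c', c \in C -> c' \in C -> c <> c' ->
    forall y, ~ (fanout F k c y /\ fanout F k c' y).

Definition rate (i : nat) (C : {set {ffun 'I_i -> A * A * A * A}}) : R :=
  Rdiv (Rdiv (ln (INR #|C|)) (ln (INR #|A|))) (INR i).

Definition is_capacity (i : nat) (v : R) : Prop :=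
  (exists F C, @unambiguous i F C /\ rate C = v) /\
  (forall F C, @unambiguous i F C -> Rle (rate C) v).

End Butterfly.

(* Main.v *)
Require Import Defs.
From Stdlib Require Import Reals Lra Classical IndefiniteDescription.
From mathcomp Require Import all_boot.
Set Implicit Arguments.
Unset Strict Implicit.

Section S.
Variable A : finType.
Implicit Types (F : netcode A).

Lemma recvE9 F b (x : A*A*A*A) :
  received F (Some (E9, b)) x T1 = ((nodeV1 F (x.1.1.1, x.1.1.2)).1, (nodeV4 F b).1).
Proof.
case: x => [[[x1 x2] x3] x4] /=.
case: (nodeV1 F (x1,x2)) => y5 y6; case: (nodeV2 F (x3,x4)) => y7 y8 /=.
by case: (nodeV4 F b).
Qed.

Lemma recvAny F att (x : A*A*A*A) : exists b,
  received F att x T1 = ((nodeV1 F (tamper att Defs.E1 x.1.1.1, tamper att Defs.E2 x.1.1.2)).1,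
                         (nodeV4 F b).1).
Proof.
case: x => [[[x1 x2] x3] x4] /=.
rewrite /received.
case: (nodeV1 F _) => y5 y6; case: (nodeV2 F _) => y7 y8 /=.
match goal with |- context[nodeV4 F ?t] => exists t end.
by case: (nodeV4 F _).
Qed.
End S.

Section Upper.
Variable A : finType.
Variable F : netcode A.
Definition f (p : A * A) : A := (nodeV1 F p).1.

Definition rel (p p' : A * A) : Prop :=
  f p = f p' \/ (exists a, f (a, p.2) = f p') \/ (exists b, f (p.1, b) = f p') \/
  (exists a, f (a, p'.2) = f p) \/ (exists b, f (p'.1, b) = f p).

Lemma conf_half (x x' : A*A*A*A) :
  (exists att, (received F att x T1).1 = f (x'.1.1.1, x'.1.1.2)) ->
  exists y, Omega F T1 x y /\ Omega F T1 x' y.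
Proof.
case=> att H.
have [b Hb] := recvAny F att x.
exists (received F att x T1); split; first by exists att.
exists (Some (E9, b)); rewrite recvE9 Hb; rewrite Hb /= in H.
by rewrite H.
Qed.

Lemma conf (x x' : A*A*A*A) : rel (x.1.1.1, x.1.1.2) (x'.1.1.1, x'.1.1.2) ->
  exists y, Omega F T1 x y /\ Omega F T1 x' y.
Proof.
move=> [H|[[a H]|[[b H]|[[a H]|[b H]]]]] /=.
- exists ((nodeV1 F (x.1.1.1, x.1.1.2)).1, (nodeV4 F x.1.1.1).1); split.
    by exists (Some (E9, x.1.1.1)); rewrite recvE9.
  by exists (Some (E9, x.1.1.1)); rewrite recvE9; rewrite /f in H; rewrite H.
- apply: conf_half; exists (Some (Defs.E1, a)); have [b Hb] := recvAny F (Some (Defs.E1, a)) x.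
  by rewrite Hb.
- apply: conf_half; exists (Some (Defs.E2, b)); have [c Hb] := recvAny F (Some (Defs.E2, b)) x.
  by rewrite Hb.
- have [y [H1 H2]] : exists y, Omega F T1 x' y /\ Omega F T1 x y.
    apply: conf_half; exists (Some (Defs.E1, a)); have [b Hb] := recvAny F (Some (Defs.E1, a)) x'.
    by rewrite Hb.
  by exists y.
- have [y [H1 H2]] : exists y, Omega F T1 x' y /\ Omega F T1 x y.
    apply: conf_half; exists (Some (Defs.E2, b)); have [c Hb] := recvAny F (Some (Defs.E2, b)) x'.
    by rewrite Hb.
  by exists y.
Qed.

Definition Rb (p : A * A) (u : A) : bool :=
  [exists a, f (a, p.2) == u] || [exists b, f (p.1, b) == u].

Definition cross (w : A) : bool :=
  [exists p, [&& f p == w, [forall a, f (a, p.2) == w] & [forall b, f (p.1, b) == w]]].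

Lemma cross_uniq w v : cross w -> cross v -> w = v.
Proof.
move=> /existsP [p /and3P [_ /forallP Hc _]] /existsP [p' /and3P [_ _ /forallP Hr]].
by move: (Hc p'.1) (Hr p.2) => /eqP -> /eqP.
Qed.

Definition psi (w : A) (p : A * A) : A :=
  if f p != w then f p else odflt w [pick u | (u != w) && Rb p u].

Lemma psi_neq w p : ~~ cross w -> psi w p != w.
Proof.
move=> Hw; rewrite /psi; case: ifP => // /negbFE /eqP Hp.
case: pickP => [u /andP [] //|Hn].
exfalso; move/negP: Hw; apply; apply/existsP; exists p.
rewrite Hp eqxx /=; apply/andP; split; apply/forallP => a; apply/negPn/negP => Ha.
  move: (Hn (f (a, p.2))); rewrite Ha /= => /negbT/negP; apply.
  by apply/orP; left; apply/existsP; exists a.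
  move: (Hn (f (p.1, a))); rewrite Ha /= => /negbT/negP; apply.
  by apply/orP; right; apply/existsP; exists a.
Qed.

Lemma Rb_rel p p' : Rb p (f p') -> rel p p'.
Proof.
rewrite /rel; case/orP => /existsP [a /eqP H].
  by right; left; exists a.
by right; right; left; exists a.
Qed.

Lemma rel_sym p p' : rel p p' -> rel p' p.
Proof. rewrite /rel; intuition. Qed.

Lemma psi_rel w p p' : ~~ cross w -> psi w p = psi w p' -> rel p p'.
Proof.
move=> Hw E.
have Hp := psi_neq p Hw; have Hp' := psi_neq p' Hw.
move: E Hp Hp'; rewrite /psi.
case: ifP => H1; case: ifP => H2.
- by move=> E _ _; left.
- case: pickP => [u /andP [_ Hu] E _ _|]; last by move=> _ ->; rewrite eqxx.
  by apply: rel_sym; apply: Rb_rel; rewrite /= E.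
- case: pickP => [u /andP [_ Hu] E _ _|]; last by move=> _ <-; rewrite eqxx.
  by apply: Rb_rel; rewrite -E.
- move=> _ _ _; left; move/negbFE/eqP: H1 => ->; by move/negbFE/eqP: H2.
Qed.

Lemma upper_card (i : nat) (C : {set {ffun 'I_i -> A * A * A * A}}) w :
  ~~ cross w -> unambiguous F C -> #|C| <= (#|A|.-1) ^ i.
Proof.
move=> Hw [_ Hu].
pose Psi (c : {ffun 'I_i -> A * A * A * A}) : {ffun 'I_i -> A} :=
  [ffun j => psi w ((c j).1.1.1, (c j).1.1.2)].
have inj : {in C &, injective Psi}.
  move=> c c' Hc Hc' E; apply/eqP/negPn/negP => /eqP Hne.
  have Hj : forall j, exists y, Omega F T1 (c j) y /\ Omega F T1 (c' j) y.
    move=> j; apply: conf; apply: (psi_rel Hw).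
    by have := congr1 (fun g : {ffun _ -> A} => g j) E; rewrite /Psi !ffunE.
  pose y j := proj1_sig (constructive_indefinite_description _ (Hj j)).
  apply: (Hu T1 c c' Hc Hc' Hne y); split => j;
    by have := proj2_sig (constructive_indefinite_description _ (Hj j)) => -[].
have -> : #|A|.-1 ^ i = #|ffun_on (predC1 w) : {pred {ffun 'I_i -> A}}|.
  by rewrite card_ffun_on cardC1 card_ord.
rewrite -(card_in_imset inj).
apply: subset_leq_card; apply/subsetP => g /imsetP [c _ ->].
apply/ffun_onP => j; rewrite /Psi ffunE /=; exact: psi_neq.
Qed.
End Upper.

Section Lower.
Variable A : finType.
Variable z : A.
Definition g2 (p : A * A) : A * A :=
  let v := if p.1 == p.2 then p.1 else z in (v, v).
Definition Fc : netcode A :=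
  NetCode g2 g2 (fun p => if p.1 == z then p.2 else p.1) (fun s => (s, s)).
Definition d (s : A) : A * A * A * A := (s, s, s, s).

Lemma inv_recv att s k : s != z ->
  let y := received Fc att (d s) k in (y.1 == s) || ((y.1 == z) && (y.2 == s)).
Proof.
move=> Hs; case: k; case: att => [[[] a]|] /=; rewrite /g2 /= ?eqxx /= ?(negbTE Hs) /= ?eqxx //;
  try (have [->|Ha] := eqVneq a s; rewrite /= ?eqxx ?(negbTE Hs) /= ?eqxx ?orbT //;
   try rewrite (negbTE Ha) /= ?eqxx ?(negbTE Hs) ?orbT //).
all: try (have [->|Hz] := eqVneq a z; rewrite /= ?eqxx ?(negbTE Hs) ?(negbTE Hz) ?orbT //).
all: have Hs' : z != s by rewrite eq_sym.
all: try (have [<-|Ha] := eqVneq s a); rewrite /= ?eqxx ?(negbTE Hs) ?(negbTE Hs') ?orbT //.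
all: rewrite ?(negbTE Ha) /= ?eqxx ?(negbTE Hs) ?(negbTE Hs') ?orbT //.
all: case: (s =P a) => _; rewrite /= ?eqxx ?(negbTE Hs) ?(negbTE Hs') //.
Qed.
Lemma inv_recv' att s k y : s != z -> received Fc att (d s) k = y ->
  (y.1 == s) || ((y.1 == z) && (y.2 == s)).
Proof. by move=> Hs <-; exact: inv_recv. Qed.
End Lower.

Section Lower2.
Variable A : finType.
Variable z : A.
Variable i : nat.
Definition Dm (g : {ffun 'I_i -> A}) : {ffun 'I_i -> A * A * A * A} := [ffun j => d (g j)].
Definition Cc : {set {ffun 'I_i -> A * A * A * A}} :=
  [set Dm g | g in (ffun_on (predC1 z) : {pred {ffun 'I_i -> A}})].

Lemma Dm_inj : injective Dm.
Proof.
move=> g g' E; apply/ffunP => j.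
by have := congr1 (fun c : {ffun _ -> A * A * A * A} => c j) E; rewrite /Dm !ffunE => -[].
Qed.

Lemma card_Cc : #|Cc| = #|A|.-1 ^ i.
Proof. by rewrite card_imset; [rewrite card_ffun_on cardC1 card_ord | exact: Dm_inj]. Qed.

Lemma Cc_unamb s0 : s0 != z -> unambiguous (Fc z) Cc.
Proof.
move=> Hs0; split.
  apply/set0Pn; exists (Dm [ffun _ => s0]); apply/imsetP; exists [ffun _ => s0] => //.
  by apply/ffun_onP => j; rewrite ffunE.
move=> k c c' /imsetP [g /ffun_onP Hg ->] /imsetP [g' /ffun_onP Hg' ->] Hne y [H1 H2].
have [j Hj] : exists j, g j <> g' j.
  apply: NNPP => Hn; apply: Hne; congr Dm; apply/ffunP => j.
  by apply: NNPP => Hj; apply: Hn; exists j.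
move: (H1 j) (H2 j); rewrite /Dm !ffunE => -[att E] [att' E'].
have := inv_recv' (Hg' j) E'; have := inv_recv' (Hg j) E.
case/orP => [/eqP e1|/andP [/eqP e1 /eqP e2]]; case/orP => [/eqP e3|/andP [/eqP e3 /eqP e4]].
- by apply: Hj; rewrite -e1 -e3.
- by move: (Hg j); rewrite -e1 e3 inE eqxx.
- by move: (Hg' j); rewrite -e3 e1 inE eqxx.
- by apply: Hj; rewrite -e2 -e4.
Qed.
End Lower2.
Lemma INR_expn (m n : nat) : INR (m ^ n) = pow (INR m) n.
Proof. elim: n => [|n IH] //=; by rewrite expnS -multE mult_INR IH. Qed.

Lemma ln_pow_eq (q i : nat) : (0 < i)%N -> (1 < q)%N ->
  Rdiv (Rdiv (ln (INR ((q - 1) ^ i))) (ln (INR q))) (INR i) = Rdiv (ln (INR (q - 1))) (ln (INR q)).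
Proof.
move=> Hi Hq.
have Hq1 : Rlt 0 (INR (q - 1)) by apply: lt_0_INR; apply/ltP; rewrite subn_gt0.
have Hi0 : INR i <> R0 by apply: not_0_INR; move=> E; rewrite E in Hi.
have Hl : ln (INR q) <> R0.
  apply: ln_neq_0; last by apply: lt_0_INR; apply/ltP; apply: ltn_trans Hq.
  move=> E; have : INR q = INR 1 by rewrite E.
  by move/INR_eq => E'; rewrite E' in Hq.
rewrite INR_expn ln_pow //; field; split => //.
Qed.

Lemma ln_pow_le (q i n : nat) : (0 < i)%N -> (1 < q)%N -> (0 < n)%N -> (n <= (q - 1) ^ i)%N ->
  Rle (Rdiv (Rdiv (ln (INR n)) (ln (INR q))) (INR i)) (Rdiv (ln (INR (q - 1))) (ln (INR q))).
Proof.
move=> Hi Hq Hn Hle.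
rewrite -(@ln_pow_eq q i Hi Hq).
have Hlq : Rlt 0 (ln (INR q)).
  rewrite -ln_1; apply: ln_increasing; first lra.
  by apply: lt_1_INR; apply/ltP.
have Hi' : Rlt 0 (INR i) by apply: lt_0_INR; apply/ltP.
rewrite /Rdiv; apply: Rmult_le_compat_r; first by left; apply: Rinv_0_lt_compat.
apply: Rmult_le_compat_r; first by left; apply: Rinv_0_lt_compat.
have Hn' : Rlt 0 (INR n) by apply: lt_0_INR; apply/ltP.
have : Rle (INR n) (INR ((q - 1) ^ i)) by apply: le_INR; apply/leP.
case/Rle_lt_or_eq_dec => [H|->]; last by right.
by left; apply: ln_increasing.
Qed.

Theorem proposition5p8 (A : finType) (i : nat) :
  0 < i -> 1 < #|A| ->
  is_capacity A i (Rdiv (ln (INR (#|A| - 1))) (ln (INR #|A|))).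
Proof.
move=> Hi HA.
have /card_gt0P [a _] : 0 < #|A| by apply: ltn_trans HA.
have /card_gt0P [b Hb] : 0 < #|predC1 a| by rewrite cardC1 -subn1 subn_gt0.
have Hba : b != a by [].
split.
  exists (Fc a), (@Cc A a i); split; first exact: Cc_unamb Hba.
  by rewrite /rate card_Cc -subn1 ln_pow_eq.
move=> F C HC.
have [w Hw] : exists w, ~~ cross F w.
  case Ha: (cross F a); last by exists a; rewrite Ha.
  exists b; apply/negP => Hcb; move: Hba; by rewrite (cross_uniq Hcb Ha) eqxx.
have Hle := upper_card Hw HC.
have Hn : 0 < #|C|.
  by case: HC => /set0Pn [c Hc] _; apply/card_gt0P; exists c.
rewrite /rate; apply: ln_pow_le => //; by rewrite subn1.
Qed.
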